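(* Let $S_3=\langle x,y\mid x^2=e,\ y^2=e,\ (xy)^3=e\rangle$ and $\Delta=\{x,y,z\}$ with $z=xyx$. Then $W=W_xU_x+W_yU_y+W_zU_z$ is a homogeneous scalar quantum walk on $C_\Delta(S_3)$ whenever, for real $\phi_1,\phi_2$, $W_x=\tfrac13(1+e^{i\phi_1}+e^{i\phi_2})$, $W_y=\tfrac13(1+e^{2\pi i/3}e^{i\phi_1}+e^{-2\pi i/3}e^{i\phi_2})$, $W_z=\tfrac13(1+e^{-2\pi i/3}e^{i\phi_1}+e^{2\pi i/3}e^{i\phi_2})$ and these values are nonzero; in particular $C_\Delta(S_3)$ admits a homogeneous scalar quantum walk.
   Context: The Cayley graph $C_\Delta(\Gamma)$ has vertex set $\Gamma$ and directed edges $(g,g\delta)$, $g\in\Gamma,\delta\in\Delta$. Let $\ell^2(\Gamma)$ have orthonormal basis $\{|g\rangle\}_{g\in\Gamma}$ and for $\delta\in\Gamma$ let $U_\delta|g\rangle=|g\delta\rangle$. A homogeneous scalar quantum walk on $C_\Delta(\Gamma)$ is a unitary operator $W=\sum_{\delta\in\Delta}W_\delta U_\delta$ with all complex coefficients $W_\delta$ nonzero. *)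

(* Defs.v *)
From mathcomp Require Import all_boot all_order all_algebra all_fingroup.
From mathcomp Require Import complex.
From mathcomp Require Import reals trigo.
Set Implicit Arguments. Unset Strict Implicit. Unset Printing Implicit Defensive.
Import GRing.Theory Num.Theory.
Local Open Scope ring_scope.

Definition expi (R : realType) (t : R) : R[i] := (cos t +i* sin t)%C.

(* Matrix entry <g| W |h> of W = \sum_{d in Delta} w d U_d on l^2(Gamma),
   where U_d |h> = |h d>.  So <g|U_d|h> = [g = h d]. *)
Definition walk_entry (R : realType) (gT : finGroupType) (Delta : {set gT})
  (w : gT -> R[i]) (g h : gT) : R[i] :=
  \sum_(d in Delta) w d * ((g == mulg h d) : bool)%:R.

(* Unitarity of an operator on l^2(Gamma) (Gamma finite) given by its matrix
   entries M g h = <g|M|h>: M^* M = I and M M^* = I. *)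
Definition unitary_op (R : realType) (gT : finGroupType)
  (M : gT -> gT -> R[i]) : Prop :=
  (forall g h : gT, \sum_(k : gT) conjc (M k g) * M k h = ((g == h) : bool)%:R)
  /\ (forall g h : gT, \sum_(k : gT) M g k * conjc (M h k) = ((g == h) : bool)%:R).

Definition homogeneous_scalar_QW (R : realType) (gT : finGroupType)
  (Delta : {set gT}) (w : gT -> R[i]) : Prop :=
  (forall d, d \in Delta -> w d != 0) /\ unitary_op (walk_entry Delta w).

(* S_3 = <x, y | x^2 = y^2 = (xy)^3 = e>, realised as 'S_3 with
   x = (0 1), y = (1 2) (these satisfy the relations and generate). *)
Definition s3x : 'S_3 := tperm (inord 0 : 'I_3) (inord 1).
Definition s3y : 'S_3 := tperm (inord 1 : 'I_3) (inord 2).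
Definition s3z : 'S_3 := mulg (mulg s3x s3y) s3x.
Definition s3Delta : {set 'S_3} := [set s3x; s3y; s3z].

(* Main.v *)
Require Import Defs.
From mathcomp Require Import all_boot all_order all_algebra all_fingroup.
From mathcomp Require Import complex.
From mathcomp Require Import reals trigo.
From mathcomp Require Import ring lra.
Import Order.TTheory GRing.Theory Num.Theory.
Local Open Scope ring_scope.
Section Trig.
Variable R : realType.

Lemma expiD (a b : R) : expi a * expi b = expi (a + b).
Proof. rewrite /expi /= cosD sinD; congr (_ +i* _)%C; ring. Qed.

Lemma conj_expi (a : R) : conjc (expi a) = expi (- a).
Proof. by rewrite /expi /= cosN sinN. Qed.

Lemma expi0 : expi (0 : R) = 1.
Proof. by rewrite /expi cos0 sin0. Qed.

Lemma conj_expiK (a : R) : conjc (expi a) * expi a = 1.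
Proof. by rewrite conj_expi expiD addNr expi0. Qed.

Lemma conjc3 : conjc (3^-1 : R[i]) = 3^-1.
Proof. by rewrite conjc_inv conjc_nat. Qed.

Lemma om_facts :
  [/\ expi (2 * pi / 3 : R) ^+ 3 = 1, expi (2 * pi / 3 : R) != 1,
     1 + expi (2 * pi / 3 : R) + expi (2 * pi / 3 : R) ^+2 = 0 &
     expi (- (2 * pi / 3) : R) = expi (2 * pi / 3 : R) ^+ 2].
Proof.
set om := expi (2 * pi / 3 : R).
have h3 : om ^+ 3 = 1.
  rewrite /om !exprS expr0 mulr1 !expiD.
  have -> : 2 * pi / 3 + (2 * pi / 3 + 2 * pi / 3) = pi *+ 2 :> R by rewrite mulr2n; field.
  by rewrite /expi cos2pi sin2pi.
have h1 : om != 1.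
  apply/negP => /eqP/(congr1 (fun z => complex.Im z)) /= hs.
  have : 0 < sin (2 * pi / 3 : R).
    apply: sin_gt0_pi; have := pi_gt0 R; move=> hp; apply/andP; split; lra.
  by rewrite hs ltxx.
have h0 : 1 + om + om ^+ 2 = 0.
  have : (om - 1) * (1 + om + om ^+ 2) = 0.
    have -> : (om - 1) * (1 + om + om ^+ 2) = om ^+ 3 - 1 by ring.
    by rewrite h3 subrr.
  by move/eqP; rewrite mulf_eq0 subr_eq0 (negbTE h1) /= => /eqP.
split => //.
by rewrite -conj_expi -/om -[conjc om]mulr1 -h3 exprS mulrA conj_expiK mul1r.
Qed.
End Trig.

Section G.
Local Open Scope group_scope.

Lemma tpE (T : finType) (x y z : T) :
  tperm x y z = if z == x then y else if z == y then x else z.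
Proof. case: tpermP => [->|->|hx hy]; do ![case: eqP => ?]; congruence. Qed.

Lemma tp_rel (T : finType) (a b c : T) : a <> b -> a <> c -> b <> c ->
  let x := tperm a b in let y := tperm b c in let z := tperm a c in
  [/\ y * z = x * y, z * x = x * y, x * z = y * x, z * y = y * x & x * y * x = z].
Proof.
move=> /eqP ab /eqP ac /eqP bc x y z.
have ba : (b == a) = false by rewrite eq_sym (negbTE ab).
have ca : (c == a) = false by rewrite eq_sym (negbTE ac).
have cb : (c == b) = false by rewrite eq_sym (negbTE bc).
move/negbTE: ab => ab; move/negbTE: ac => ac; move/negbTE: bc => bc.
split.
all: apply/permP => i; rewrite !permM !tpE.
all: case: (eqVneq i a) => [E|ia]; [|case: (eqVneq i b) => [E|ib]; [|case: (eqVneq i c) => [E|ic]]].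
all: try (rewrite ?E; do 6 rewrite ?(eqxx, ab, ac, bc, ba, ca, cb) /=; by []).
all: move/negbTE: ia => ia; move/negbTE: ib => ib; move/negbTE: ic => ic.
all: do 6 rewrite ?(eqxx, ab, ac, bc, ba, ca, cb, ia, ib, ic) /=.
all: by [].
Qed.

Lemma tp_neq (T : finType) (a b c : T) : a <> b -> a <> c -> b <> c ->
  [/\ tperm a b != tperm b c, tperm a b != tperm a c & tperm b c != tperm a c].
Proof.
move=> ab ac bc; split; apply/eqP => /permP H.
- by move: (H a); rewrite !tpE; do ![case: eqP => ?]; congruence.
- by move: (H a); rewrite !tpE; do ![case: eqP => ?]; congruence.
- by move: (H b); rewrite !tpE; do ![case: eqP => ?]; congruence.
Qed.

Lemma s3_facts :
  [/\ s3y * s3z = s3x * s3y, s3z * s3x = s3x * s3y, s3x * s3z = s3y * s3x &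
      s3z * s3y = s3y * s3x] /\
  [/\ s3x^-1 = s3x, s3y^-1 = s3y & s3z^-1 = s3z] /\
  [/\ s3x != s3y, s3x != s3z & s3y != s3z].
Proof.
have ab : (inord 0 : 'I_3) <> inord 1 by move/(congr1 val); rewrite /= !inordK.
have ac : (inord 0 : 'I_3) <> inord 2 by move/(congr1 val); rewrite /= !inordK.
have bc : (inord 1 : 'I_3) <> inord 2 by move/(congr1 val); rewrite /= !inordK.
have [h1 h2 h3 h4 h5] := @tp_rel _ _ _ _ ab ac bc.
have hz : s3z = tperm (inord 0) (inord 2) by rewrite /s3z -h5.
have [n1 n2 n3] := @tp_neq _ _ _ _ ab ac bc.
rewrite hz /s3x /s3y; split; [by split|split; last by split].
by split; rewrite ?tpermV.
Qed.
End G.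

Lemma alg_keys (C : comRingType) (k u U v W o : C) :
  3%:R * k = 1 -> U * u = 1 -> W * v = 1 -> 1 + o + o ^+ 2 = 0 ->
  [/\ k * (1 + U + W) * (k * (1 + u + v)) +
      k * (1 + o ^+ 2 * U + (o ^+ 2) ^+ 2 * W) * (k * (1 + o * u + o ^+ 2 * v)) +
      k * (1 + (o ^+ 2) ^+ 2 * U + o ^+ 2 * W) * (k * (1 + o ^+ 2 * u + o * v)) = 1,
      k * (1 + U + W) * (k * (1 + o ^+ 2 * u + o * v)) +
      k * (1 + o ^+ 2 * U + (o ^+ 2) ^+ 2 * W) * (k * (1 + u + v)) +
      k * (1 + (o ^+ 2) ^+ 2 * U + o ^+ 2 * W) * (k * (1 + o * u + o ^+ 2 * v)) = 0 &
      k * (1 + U + W) * (k * (1 + o * u + o ^+ 2 * v)) +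
      k * (1 + o ^+ 2 * U + (o ^+ 2) ^+ 2 * W) * (k * (1 + o ^+ 2 * u + o * v)) +
      k * (1 + (o ^+ 2) ^+ 2 * U + o ^+ 2 * W) * (k * (1 + u + v)) = 0].
Proof.
move=> hk hu hw ho.
set gu := U * u - 1. set gw := W * v - 1. set go := 1 + o + o ^+ 2.
have gu0 : gu = 0 by rewrite /gu hu subrr.
have gw0 : gw = 0 by rewrite /gw hw subrr.
have go0 : go = 0 by [].
split.
- have -> : k * (1 + U + W) * (k * (1 + u + v)) +
      k * (1 + o ^+ 2 * U + (o ^+ 2) ^+ 2 * W) * (k * (1 + o * u + o ^+ 2 * v)) +
      k * (1 + (o ^+ 2) ^+ 2 * U + o ^+ 2 * W) * (k * (1 + o ^+ 2 * u + o * v)) =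
      (3%:R * k) * (3%:R * k) + k * k * (
      ((1%:R) + o^+3 + o^+6) * gu + ((1%:R) + o^+3 + o^+6) * gw +
      ((-4%:R) + 4%:R*o + (-2%:R*o^+3) + 2%:R*o^+4 + W + (-W*o) + W*o^+2 + v + U + (-U*o) + U*o^+2 + U*v + (-U*v*o) + U*v*o^+3 + u + u*W + (-u*W*o) + u*W*o^+3) * go)
    by rewrite /gu /gw /go; ring.
  by rewrite gu0 gw0 go0 hk !(mulr0, addr0, mulr1).
- have -> : k * (1 + U + W) * (k * (1 + o ^+ 2 * u + o * v)) +
      k * (1 + o ^+ 2 * U + (o ^+ 2) ^+ 2 * W) * (k * (1 + u + v)) +
      k * (1 + (o ^+ 2) ^+ 2 * U + o ^+ 2 * W) * (k * (1 + o * u + o ^+ 2 * v)) =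
      k * k * (
      (2%:R*o^+2 + o^+5) * gu + (o + 2%:R*o^+4) * gw +
      ((3%:R) + (-2%:R*o) + o^+2 + o^+3 + W + (-W*o) + W*o^+2 + v + U + (-U*o) + U*o^+2 + U*v*o + (-U*v*o^+3) + U*v*o^+4 + u + u*W*o^+2) * go)
    by rewrite /gu /gw /go; ring.
  by rewrite gu0 gw0 go0 !(mulr0, addr0).
- have -> : k * (1 + U + W) * (k * (1 + o * u + o ^+ 2 * v)) +
      k * (1 + o ^+ 2 * U + (o ^+ 2) ^+ 2 * W) * (k * (1 + o ^+ 2 * u + o * v)) +
      k * (1 + (o ^+ 2) ^+ 2 * U + o ^+ 2 * W) * (k * (1 + u + v)) =
      k * k * (
      (o + 2%:R*o^+4) * gu + (2%:R*o^+2 + o^+5) * gw +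
      ((3%:R) + (-2%:R*o) + o^+2 + o^+3 + W + (-W*o) + W*o^+2 + v + U + (-U*o) + U*o^+2 + U*v*o^+2 + u + u*W*o + (-u*W*o^+3) + u*W*o^+4) * go)
    by rewrite /gu /gw /go; ring.
  by rewrite gu0 gw0 go0 !(mulr0, addr0).
Qed.

Lemma sumD (C : nmodType) (F : 'S_3 -> C) (hxy : s3x != s3y) (hxz : s3x != s3z) (hyz : s3y != s3z) :
  \sum_(d in s3Delta) F d = F s3x + F s3y + F s3z.
Proof.
have -> : s3Delta = s3x |: (s3y |: [set s3z]) by apply/setP => d; rewrite !inE ?orbA.
rewrite !big_setU1 ?big_set1 ?addrA //= ?inE ?negb_or ?hxy ?hxz ?hyz //; by rewrite addrA.
Qed.

Section Conj.
Variable R : realType.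
Lemma conjM (x y : R[i]) : conjc (x * y) = conjc x * conjc y. Proof. exact: rmorphM. Qed.
Lemma conjD (x y : R[i]) : conjc (x + y) = conjc x + conjc y. Proof. exact: rmorphD. Qed.
Lemma conj1 : conjc (1 : R[i]) = 1. Proof. exact: rmorph1. Qed.
Lemma conjX (x : R[i]) n : conjc (x ^+ n) = conjc x ^+ n. Proof. exact: rmorphXn. Qed.
Lemma conjb (b : bool) : conjc (b%:R : R[i]) = b%:R. Proof. exact: conjc_nat. Qed.
Lemma conjS (I : finType) (P : pred I) (F : I -> R[i]) :
  conjc (\sum_(i | P i) F i) = \sum_(i | P i) conjc (F i).
Proof. exact: rmorph_sum. Qed.
Lemma natT : ((true : nat)%:R : R[i]) = 1. Proof. by []. Qed.
Lemma natF : ((false : nat)%:R : R[i]) = 0. Proof. by []. Qed.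
End Conj.

Lemma L1 (R : realType) (gT : finGroupType) (D : {set gT}) (w : gT -> R[i]) g h :
  \sum_k conjc (walk_entry D w k g) * walk_entry D w k h =
  \sum_(d in D) \sum_(e in D) conjc (w d) * w e * ((g * d == h * e)%g : bool)%:R.
Proof.
rewrite /walk_entry.
under eq_bigr => k _ do rewrite conjS mulr_suml.
rewrite exchange_big; apply: eq_bigr => d _.
under eq_bigr => k _ do rewrite mulr_sumr.
rewrite exchange_big; apply: eq_bigr => e _.
rewrite (bigD1 (g * d)%g) // big1 ?addr0.
  by rewrite eqxx conjM conjb natT mulr1 mulrA; exact: addr0.
by move=> k; rewrite andTb => /negbTE ->; rewrite conjM conjb natF !mulr0 mul0r.
Qed.

Lemma eqMV (gT : finGroupType) (g k d : gT) : (g == k * d)%g = (k == g * d^-1)%g.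
Proof. by rewrite eq_sym (can2_eq (mulgK d) (mulgKV d)). Qed.

Lemma L2 (R : realType) (gT : finGroupType) (D : {set gT}) (w : gT -> R[i]) g h :
  \sum_k walk_entry D w g k * conjc (walk_entry D w h k) =
  \sum_(d in D) \sum_(e in D) w d * conjc (w e) * ((g * d^-1 == h * e^-1)%g : bool)%:R.
Proof.
rewrite /walk_entry.
under eq_bigr => k _ do rewrite conjS mulr_sumr.
under eq_bigr => k _ do under eq_bigr => e _ do rewrite mulr_suml.
rewrite exchange_big.
under eq_bigr => e _ do rewrite exchange_big.
rewrite exchange_big; apply: eq_bigr => d _.
apply: eq_bigr => e _.
rewrite (bigD1 (g * d^-1)%g) // big1 ?addr0.
  by rewrite (@eqMV _ g) eqxx (@eqMV _ h) conjM conjb natT mulr1 mulrA; exact: addr0.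
by move=> k; rewrite andTb => /negbTE kn; rewrite (@eqMV _ g) kn natF !(mulr0, mul0r).
Qed.

Lemma eqinv (gT : finGroupType) (g h d e : gT) : (d * d = 1)%g ->
  (g * d == h * e)%g = (h^-1 * g == e * d)%g.
Proof.
move=> dd.
have di : (d^-1 = d)%g by rewrite -[(d^-1)%g]mulg1 -dd mulKg.
apply/eqP/eqP => H.
  by rewrite -(mulgK d g) H di -mulgA mulKg.
by rewrite -(mulKVg h g) H -!mulgA dd mulg1.
Qed.

Theorem mainTheorem8 (R : realType) (phi1 phi2 : R) :
  let om := expi (2 * pi / 3 : R) in
  let omb := expi (- (2 * pi / 3) : R) in
  let Wx : R[i] := 3^-1 * (1 + expi phi1 + expi phi2) in
  let Wy : R[i] := 3^-1 * (1 + om * expi phi1 + omb * expi phi2) in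
  let Wz : R[i] := 3^-1 * (1 + omb * expi phi1 + om * expi phi2) in
  let w : 'S_3 -> R[i] :=
    fun g => if g == s3x then Wx else if g == s3y then Wy else Wz in
  Wx != 0 -> Wy != 0 -> Wz != 0 ->
  homogeneous_scalar_QW s3Delta w /\
  (exists w' : 'S_3 -> R[i], homogeneous_scalar_QW s3Delta w').
Proof.
move=> om omb Wx Wy Wz w hx hy hz.
have [[r1 r2 r3 r4] [[ix iy iz] [nxy nxz nyz]]] := s3_facts.
have [h3 h1 h0 hb] := om_facts R.
have wx : w s3x = Wx by rewrite /w eqxx.
have wy : w s3y = Wy by rewrite /w (eq_sym s3y) (negbTE nxy) eqxx.
have wz : w s3z = Wz by rewrite /w (eq_sym s3z) (negbTE nxz) (eq_sym s3z) (negbTE nyz).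
have co : conjc om = om ^+ 2 by rewrite /om conj_expi hb.
have cWx : conjc Wx = 3^-1 * (1 + conjc (expi phi1) + conjc (expi phi2)).
  by rewrite /Wx conjM conjc3 !conjD conj1.
have cWy : conjc Wy = 3^-1 * (1 + om ^+ 2 * conjc (expi phi1) + (om ^+ 2) ^+ 2 * conjc (expi phi2)).
  by rewrite /Wy /omb hb conjM conjc3 !conjD conj1 conjM conjM conjX -/om co.
have cWz : conjc Wz = 3^-1 * (1 + (om ^+ 2) ^+ 2 * conjc (expi phi1) + om ^+ 2 * conjc (expi phi2)).
  by rewrite /Wz /omb hb conjM conjc3 !conjD conj1 conjM conjX conjM -/om co.
have eWy : Wy = 3^-1 * (1 + om * expi phi1 + om ^+ 2 * expi phi2) by rewrite /Wy /omb hb.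
have eWz : Wz = 3^-1 * (1 + om ^+ 2 * expi phi1 + om * expi phi2) by rewrite /Wz /omb hb.
have hk : 3%:R * 3^-1 = 1 :> R[i] by rewrite mulfV // pnatr_eq0.
have [kN kX1 kX2] := @alg_keys _ _ _ _ _ _ _ hk (@conj_expiK R phi1) (@conj_expiK R phi2) h0.
have N : conjc Wx * Wx + conjc Wy * Wy + conjc Wz * Wz = 1.
  by rewrite cWx cWy cWz eWy eWz; exact: kN.
have X1 : conjc Wx * Wz + conjc Wy * Wx + conjc Wz * Wy = 0.
  by rewrite cWx cWy cWz eWy eWz; exact: kX1.
have X2 : conjc Wx * Wy + conjc Wy * Wz + conjc Wz * Wx = 0.
  by rewrite cWx cWy cWz eWy eWz; exact: kX2.
have xx : (s3x * s3x = 1)%g by rewrite -{2}ix mulgV.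
have yy : (s3y * s3y = 1)%g by rewrite -{2}iy mulgV.
have zz : (s3z * s3z = 1)%g by rewrite -{2}iz mulgV.
suff hQW : homogeneous_scalar_QW s3Delta w by split => //; exists w.
split.
  move=> d; rewrite /s3Delta !inE => /orP [/orP [/eqP -> | /eqP ->] | /eqP ->].
  - by rewrite wx.
  - by rewrite wy.
  - by rewrite wz.
split => g h.
- rewrite L1 !(sumD _ _ nxy nxz nyz) wx wy wz.
  rewrite (@eqinv _ g h s3x s3x xx) (@eqinv _ g h s3x s3y xx) (@eqinv _ g h s3x s3z xx).
  rewrite (@eqinv _ g h s3y s3x yy) (@eqinv _ g h s3y s3y yy) (@eqinv _ g h s3y s3z yy).
  rewrite (@eqinv _ g h s3z s3x zz) (@eqinv _ g h s3z s3y zz) (@eqinv _ g h s3z s3z zz).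
  rewrite r1 r2 r3 r4 xx yy zz -eq_mulVg1 [g == h]eq_sym.
  set e1 := ((h == g) : bool)%:R.
  set er := (((h^-1 * g)%g == (s3x * s3y)%g) : bool)%:R.
  set er' := (((h^-1 * g)%g == (s3y * s3x)%g) : bool)%:R.
  transitivity ((conjc Wx * Wx + conjc Wy * Wy + conjc Wz * Wz) * e1 +
     (conjc Wx * Wz + conjc Wy * Wx + conjc Wz * Wy) * er +
     (conjc Wx * Wy + conjc Wy * Wz + conjc Wz * Wx) * er'); first by ring.
  by rewrite N X1 X2 !mul0r !addr0 mul1r.
- rewrite L2 !(sumD _ _ nxy nxz nyz) wx wy wz ix iy iz.
  rewrite (@eqinv _ g h s3x s3x xx) (@eqinv _ g h s3x s3y xx) (@eqinv _ g h s3x s3z xx).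
  rewrite (@eqinv _ g h s3y s3x yy) (@eqinv _ g h s3y s3y yy) (@eqinv _ g h s3y s3z yy).
  rewrite (@eqinv _ g h s3z s3x zz) (@eqinv _ g h s3z s3y zz) (@eqinv _ g h s3z s3z zz).
  rewrite r1 r2 r3 r4 xx yy zz -eq_mulVg1 [g == h]eq_sym.
  set e1 := ((h == g) : bool)%:R.
  set er := (((h^-1 * g)%g == (s3x * s3y)%g) : bool)%:R.
  set er' := (((h^-1 * g)%g == (s3y * s3x)%g) : bool)%:R.
  transitivity ((conjc Wx * Wx + conjc Wy * Wy + conjc Wz * Wz) * e1 +
     (conjc Wx * Wy + conjc Wy * Wz + conjc Wz * Wx) * er +
     (conjc Wx * Wz + conjc Wy * Wx + conjc Wz * Wy) * er'); first by ring.
  by rewrite N X1 X2 !mul0r !addr0 mul1r.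
Qed.
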